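(* Let $(a_i)_{i\ge0}$ be a sequence in $[0,\infty]$ and $(s_i)_{i\ge0}$ a sequence in $[0,\infty)$. Put $y_i=1+\sum_{j\le i}a_j$, $t_i=\sum_{j<i}s_j$ (for $i\in\mathbb{N}\cup\{\infty\}$) and $I=\inf\{i:y_i=\infty\}$ (with $\inf\emptyset=\infty$). Suppose there is $c>0$ such that for every $i$, $a_{i+1}\ge c\,y_i^2s_i/2$ and $s_i\le1/y_i$. Then $t_I\le2+4/c$.
   Context: Elementary deterministic statement about real sequences; conventions $1/\infty=0$ and $\inf\emptyset=\infty$. *)

(* Defs.v *)
From HB Require Import structures.
From mathcomp Require Import all_boot all_order all_algebra.
From mathcomp Require Import all_classical all_reals all_analysis.
Set Implicit Arguments. Unset Strict Implicit. Unset Printing Implicit Defensive.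
Import Order.TTheory GRing.Theory Num.Theory.
Local Open Scope ring_scope.
Local Open Scope ereal_scope.

Definition yseq (R : realType) (a : nat -> \bar R) (i : nat) : \bar R :=
  1 + \sum_(0 <= j < i.+1) a j.

(* I = inf {i : y_i = +oo}, with inf of the empty set = oo (encoded as None) *)
Definition Iinf (R : realType) (a : nat -> \bar R) : option nat :=
  match pselect (exists i, yseq a i == +oo) with
  | left H => Some (ex_minn H)
  | right _ => None
  end.

Definition tseq (R : realType) (s : nat -> R) (I : option nat) : \bar R :=
  match I with
  | Some n => (\sum_(0 <= j < n) s j)%:E
  | None => \sum_(0 <= j <oo) (s j)%:E
  end.

(* Main.v *)
Require Import Defs.
From HB Require Import structures.
From mathcomp Require Import all_boot all_order all_algebra.
From mathcomp Require Import all_classical all_reals all_analysis.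
From mathcomp Require Import ring lra.
Import Order.TTheory GRing.Theory Num.Theory.
Local Open Scope ring_scope.

Lemma key (R : realType) (Y A s c : R) : 1 <= Y -> 0 <= A -> 0 <= s -> 0 < c ->
  c / 2 * Y ^+ 2 * s <= A -> s <= Y^-1 ->
  s <= (2 + 4 / c) / Y - (2 + 4 / c) / (Y + A).
Proof.
move=> Y1 A0 s0 c0 H1 H2.
have Y0 : 0 < Y by lra.
have YA0 : 0 < Y + A by lra.
have sY : s * Y <= 1 by have := ler_wpM2r (ltW Y0) H2; rewrite mulVf ?lt0r_neq0.
have E : (2 + 4 / c) / Y - (2 + 4 / c) / (Y + A) = (2 + 4/c) * A / (Y * (Y + A)).
  by field; rewrite ?lt0r_neq0.
rewrite E ler_pdivlMr ?mulr_gt0 //.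
have Kc : 4 / c * (c / 2 * Y ^+ 2 * s) = 2 * Y^+2 * s.
  by field; rewrite ?lt0r_neq0.
have h4 : 0 <= 4 / c by rewrite divr_ge0 // ltW.
have : 4 / c * (c / 2 * Y ^+ 2 * s) <= 4 / c * A by rewrite ler_wpM2l.
rewrite Kc => H3.
case: (lerP Y A) => HYA.
  nra.
nra.
Qed.

Local Open Scope ereal_scope.

Lemma yS (R : realType) (a : nat -> \bar R) n : yseq a n.+1 = yseq a n + a n.+1.
Proof. by rewrite /yseq big_nat_recr //= addeA. Qed.

Lemma yge1 (R : realType) (a : nat -> \bar R) n : (forall i, 0 <= a i) -> 1 <= yseq a n.
Proof. move=> a0; rewrite /yseq leeDl // sume_ge0 // => i _; exact: a0. Qed.

Lemma yfin (R : realType) (a : nat -> \bar R) n Y' : (forall i, 0 <= a i) ->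
  yseq a n.+1 = Y'%:E -> exists Y A, [/\ yseq a n = Y%:E, a n.+1 = A%:E & Y' = (Y + A)%R].
Proof.
move=> a0; rewrite yS.
have := @yge1 _ a n a0; have := a0 n.+1.
case: (a n.+1) => [A||] //; case: (yseq a n) => [Y||] //= _ _ [<-].
by exists Y, A.
Qed.

Lemma partA (R : realType) (a : nat -> \bar R) (s : nat -> R) (c : R) :
  (forall i, 0 <= a i) ->
  (forall i, (0 <= s i)%R) ->
  (0 < c)%R ->
  (forall i, (c / 2)%:E * (yseq a i ^+ 2) * (s i)%:E <= a i.+1) ->
  (forall i, (s i)%:E <= (yseq a i)^-1) ->
  forall n Y, yseq a n = Y%:E ->
  (\sum_(0 <= j < n) s j <= (2 + 4 / c) - (2 + 4 / c) / Y)%R.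
Proof.
move=> a0 s0 c0 H4 H5; elim=> [|n IH] Y' EY'.
  rewrite big_geq // subr_ge0.
  have : 1 <= yseq a 0 by exact: yge1.
  rewrite EY' lee_fin => Y1.
  have K0 : (0 <= 2 + 4 / c)%R by rewrite addr_ge0 // divr_ge0 // ltW.
  rewrite ler_pdivrMr ?(lt_le_trans ltr01) //.
  by rewrite -{1}(mulr1 (2 + 4/c)%R) ler_wpM2l.
have [Y [A [EY EA ->]]] := @yfin _ a n Y' a0 EY'.
have Y1 : (1 <= Y)%R by rewrite -lee_fin -EY; exact: yge1.
have A0 : (0 <= A)%R by rewrite -lee_fin -EA.
have h1 := H4 n; rewrite EY EA -EFin_expe -!EFinM lee_fin in h1.
have h2 := H5 n; rewrite EY inver (negbTE (lt0r_neq0 (lt_le_trans ltr01 Y1))) lee_fin in h2.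
have := @key _ Y A (s n) c Y1 A0 (s0 n) c0 h1 h2.
have := IH Y EY.
rewrite big_nat_recr //=; lra.
Qed.

Theorem lemma7p2 (R : realType) (a : nat -> \bar R) (s : nat -> R) (c : R) :
  (forall i, 0 <= a i) ->
  (forall i, (0 <= s i)%R) ->
  (0 < c)%R ->
  (forall i, (c / 2)%:E * (yseq a i ^+ 2) * (s i)%:E <= a i.+1) ->
  (forall i, (s i)%:E <= (yseq a i)^-1) ->
  tseq s (Iinf a) <= (2 + 4 / c)%:E.
Proof.
move=> a0 s0 c0 H4 H5.
have K0 : (0 <= 2 + 4 / c)%R by rewrite addr_ge0 // divr_ge0 // ltW.
have B : forall n, yseq a n != +oo -> (\sum_(0 <= j < n.+1) s j <= 2 + 4 / c)%R.
  move=> n; have := @yge1 _ a n a0; case Ey: (yseq a n) => [Y||] // Y1 _.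
  rewrite lee_fin in Y1.
  have Y0 : (0 < Y)%R by lra.
  have := @partA _ a s c a0 s0 c0 H4 H5 n Y Ey.
  have h2 := H5 n; rewrite Ey inver (negbTE (lt0r_neq0 Y0)) lee_fin in h2.
  have : (Y^-1 <= (2 + 4 / c) / Y)%R.
    rewrite -[X in (X <= _)%R]mul1r ler_wpM2r ?invr_ge0 ?ltW //.
    have : (0 <= 4 / c)%R by rewrite divr_ge0 // ltW.
    lra.
  rewrite big_nat_recr //=; lra.
rewrite /tseq /Iinf; case: pselect => [H|H].
  case: ex_minnP => n Hn Hmin.
  case: n Hn Hmin => [|m] Hn Hmin.
    by rewrite big_geq // lee_fin.
  rewrite lee_fin; apply: B; apply/negP => Hm.
  by have := Hmin m Hm; rewrite ltnn.
apply: lime_le; first by apply: is_cvg_nneseries => i _ _; rewrite lee_fin.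
apply: nearW => -[|n] /=.
  by rewrite big_geq // lee_fin.
rewrite sumEFin lee_fin; apply: B; apply/negP => Hn.
by apply: H; exists n.
Qed.
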